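(* Let $(a_n)_{n\ge 0}$ be the $0/1$ sequence with $a_n=1$ if $n+1$ is a power of $2$ (i.e. $n=2^k-1$ for some integer $k\ge 0$) and $a_n=0$ otherwise. Call a permutation $\pi$ of $\{0,1,\dots,n-1\}$ nimble if for every $i\in\{0,\dots,n-1\}$ the number $i+\pi(i)+1$ is a power of $2$. Then for every integer $n\ge 1$ there exists a unique nimble permutation $\pi_n$ of $\{0,1,\dots,n-1\}$, and $$\det\left(a_{i+j}\right)_{i,j=0}^{n-1}=\operatorname{sgn}(\pi_n)\,a_{0+\pi_n(0)}a_{1+\pi_n(1)}\cdots a_{n-1+\pi_n(n-1)}=(-1)^{\binom{n}{2}}.$$
   Context: $a_n$ coincides with the Catalan number $C_n=\frac{1}{n+1}\binom{2n}{n}$ reduced modulo $2$ and regarded as an integer in $\{0,1\}$. A permutation is nimble exactly when $a_{0+\pi(0)}\cdots a_{n-1+\pi(n-1)}\neq 0$. *)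

(* Defs.v *)
From HB Require Import structures.
From mathcomp Require Import all_boot all_order all_algebra all_fingroup.
Set Implicit Arguments. Unset Strict Implicit. Unset Printing Implicit Defensive.
Import GRing.Theory Num.Theory.

Definition is_pow2 (m : nat) : Prop := exists k : nat, m = 2 ^ k.

Definition a_seq (n : nat) : int :=
  if [exists k : 'I_n.+2, n.+1 == 2 ^ k] then 1%R else 0%R.

Definition nimble (n : nat) (s : 'S_n) : Prop :=
  forall i : 'I_n, is_pow2 (i + s i + 1).

Definition hankel_a (n : nat) : 'M[int]_n := \matrix_(i < n, j < n) a_seq (i + j).

(* Main.v *)
Require Import Defs.
From mathcomp Require Import all_boot all_order all_algebra all_fingroup.
From mathcomp Require Import zify.
Import GRing.Theory Num.Theory.

Lemma pow2_eq k x : is_pow2 x -> 2 ^ k < 2 * x -> x < 2 * 2 ^ k -> x = 2 ^ k.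
Proof.
case=> e ->; rewrite -!expnS !ltn_exp2l // => h1 h2.
by have -> : e = k by lia.
Qed.

Lemma exK m : 0 < m -> exists k, m <= 2 ^ k < 2 * m.
Proof.
elim: m => [//|m IH] _.
case: m IH => [|m] IH; first by exists 0.
have [k /andP [h1 h2]] := IH isT.
have [h3|h3] := leqP m.+2 (2 ^ k).
  by exists k; apply/andP; split; lia.
exists k.+1; rewrite expnS; apply/andP; split; lia.
Qed.

Definition Pm {N : nat} (m : nat) (s : 'S_N) :=
  (forall i : 'I_N, i < m -> s i < m) /\
  (forall i : 'I_N, i < m -> is_pow2 (i + s i + 1)).

Lemma high N m (s : 'S_N) k (i : 'I_N) : Pm m s -> m <= 2 ^ k -> i < m ->
  2 ^ k < 2 * (i + 1) -> i + s i + 1 = 2 ^ k.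
Proof.
move=> [h1 h2] hm hi hk; apply: pow2_eq; first exact: h2.
  lia.
have := h1 i hi; lia.
Qed.

Lemma hit N m (s : 'S_N) k (i : 'I_N) : m <= N -> Pm m s -> m <= 2 ^ k -> 2 ^ k < 2 * m ->
  i < m -> 2 ^ k - m <= s i -> 2 * (s i + 1) <= 2 ^ k -> (i : nat) = 2 ^ k - 1 - s i.
Proof.
move=> hN hP hm hk hi ht hj.
have hsi := hP.1 i hi.
have ho : 2 ^ k - 1 - s i < N by lia.
set o := Ordinal ho.
have hoh := @high N m s k o hP hm.
have e : s o = s i.
  apply: val_inj; have := hoh ltac:(rewrite /=; lia) ltac:(rewrite /=; lia).
  rewrite /=; lia.
by rewrite -[in LHS](perm_inj e).
Qed.

Lemma coreB N m (s : 'S_N) k : m <= N -> Pm m s -> Pm m s^-1 -> m <= 2 ^ k -> 2 ^ k < 2 * m ->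
  forall i : 'I_N, i < 2 ^ k - m -> s i < 2 ^ k - m.
Proof.
move=> hN hP hQ hm hk i hi.
have him : i < m by lia.
have hsi := hP.1 i him.
rewrite ltnNge; apply/negP => ht.
have [hj|hj] := ltnP (2 ^ k) (2 * (s i + 1)).
  have := @high _ _ _ k (s i) hQ hm hsi hj; rewrite permK; lia.
have := @hit _ _ _ k i hN hP hm hk him ht hj; lia.
Qed.

Lemma coreC N m (s : 'S_N) k : m <= N -> Pm m s -> Pm m s^-1 -> m <= 2 ^ k -> 2 ^ k < 2 * m ->
  forall i : 'I_N, 2 ^ k - m <= i -> i < m -> (s i : nat) = 2 ^ k - 1 - i.
Proof.
move=> hN hP hQ hm hk i ht him.
have hsi := hP.1 i him.
have [hj|hj] := ltnP (2 ^ k) (2 * (s i + 1)).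
  have := @high _ _ _ k (s i) hQ hm hsi hj; rewrite permK; lia.
have [ht'|ht'] := leqP (2 ^ k - m) (s i).
  have := @hit _ _ _ k i hN hP hm hk him ht' hj; lia.
have hB : Pm m (s^-1)^-1 by rewrite invgK.
have := @coreB _ _ _ k hN hQ hB hm hk (s i) ht'; rewrite permK; lia.
Qed.

Lemma uniqP N m : m <= N -> forall (s1 s2 : 'S_N), Pm m s1 -> Pm m s1^-1 -> Pm m s2 -> Pm m s2^-1 ->
  forall i : 'I_N, i < m -> s1 i = s2 i.
Proof.
elim/ltn_ind: m => m IH hN s1 s2 h1 h1' h2 h2' i hi.
have [k /andP [hm hk]] : exists k, m <= 2 ^ k < 2 * m by apply: exK; lia.
have [ht|ht] := leqP (2 ^ k - m) i.
  by apply: ord_inj; rewrite (@coreC _ _ _ k hN h1 h1' hm hk i ht hi) (@coreC _ _ _ k hN h2 h2' hm hk i ht hi).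
have restr (s : 'S_N) : Pm m s -> Pm m s^-1 -> Pm (2 ^ k - m) s.
  move=> hP hQ; split; first exact: (@coreB _ _ _ k hN hP hQ hm hk).
  move=> j hj; apply: hP.2; lia.
have h1'' : Pm m (s1^-1)^-1 by rewrite invgK.
have h2'' : Pm m (s2^-1)^-1 by rewrite invgK.
apply: (IH (2 ^ k - m)); try lia; by apply: restr.
Qed.

Lemma existP N m : m <= N -> exists s : 'S_N, (forall i : 'I_N, m <= i -> s i = i) /\
  (forall i : 'I_N, i < m -> is_pow2 (i + s i + 1)).
Proof.
elim/ltn_ind: m => m IH hmN.
case: (posnP m) => [->|m0].
  by exists 1%g; split=> i; rewrite ?perm1 // ltn0.
have [k /andP [hm hk]] : exists k, m <= 2 ^ k < 2 * m by apply: exK.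
set t := 2 ^ k - m.
have ht1 : t < m by rewrite /t; lia.
have ht2 : t <= N by rewrite /t; lia.
have [sg [sg1 sg2]] := IH t ht1 ht2.
have sgt (i : 'I_N) : i < t -> sg i < t.
  move=> hi; rewrite ltnNge; apply/negP => h.
  have := sg1 _ h => /perm_inj e; rewrite e in h; lia.
pose f (i : 'I_N) : 'I_N := if (t <= i) && (i < m) then insubd i (2 ^ k - 1 - i) else sg i.
have fv (i : 'I_N) : t <= i -> i < m -> (f i : nat) = 2 ^ k - 1 - i.
  move=> a b; rewrite /f a b /= val_insubd ifT //; lia.
have fo (i : 'I_N) : ~~ ((t <= i) && (i < m)) -> f i = sg i.
  by move=> /negPf h; rewrite /f h.
have finj : injective f.
  move=> i j e.
  case: (boolP ((t <= i) && (i < m))) => /andP hi; case: (boolP ((t <= j) && (j < m))) => /andP hj.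
  - case: hi hj => a b [c d]; apply: ord_inj; move: (congr1 (@nat_of_ord N) e); rewrite !fv //; lia.
  - case: hi => a b; move: (congr1 (@nat_of_ord N) e); rewrite (fv i) // (fo j); last by apply/andP.
    case: (ltnP j t) => jt; first by have := sgt _ jt; lia.
    have jm : m <= j by apply/negP => /negP; rewrite -ltnNge => jm; apply: hj; split.
    rewrite sg1; lia.
  - case: hj => a b; move: (congr1 (@nat_of_ord N) e); rewrite (fv j) // (fo i); last by apply/andP.
    case: (ltnP i t) => it; first by have := sgt _ it; lia.
    have im : m <= i by apply/negP => /negP; rewrite -ltnNge => im; apply: hi; split.
    rewrite sg1; lia.
  - by move: e; rewrite !fo; [apply: perm_inj| |]; apply/andP.
exists (perm finj); split.
  move=> i hi; rewrite permE fo; last lia.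
  by apply: sg1; lia.
move=> i hi; rewrite permE.
case: (ltnP i t) => it.
  rewrite fo; last lia.
  exact: sg2.
rewrite fv //; exists k; lia.
Qed.

Lemma invol_odd (T : finType) : forall n (s : {perm T}), #|[set x | s x != x]| = n ->
  (forall x, s (s x) = x) -> ~~ odd n /\ odd_perm s = odd n./2.
Proof.
elim/ltn_ind => n IH s hn hs.
case: (set_0Vmem [set x | s x != x]) => [e| [x hx]].
  have n0 : n = 0 by rewrite -hn e cards0.
  have -> : s = 1%g.
    apply/permP => z; rewrite perm1; move/setP: e => /(_ z); rewrite !inE.
    by move/negbFE/eqP.
  by rewrite n0 odd_perm1.
rewrite inE in hx.
have comm z : s (tperm x (s x) z) = tperm x (s x) (s z).
  case: (tpermP x (s x) z) => [->|->|zx zy]; first by rewrite hs tpermR.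
    by rewrite hs tpermL.
  rewrite tpermD //; apply/eqP => e.
    by apply: zy; rewrite e hs.
  by apply: zx; apply: (@perm_inj _ s); rewrite e.
pose s' := (tperm x (s x) * s)%g.
have s'E z : s' z = tperm x (s x) (s z) by rewrite permM comm.
have hs' z : s' (s' z) = z.
  by rewrite !s'E comm hs tpermK.
have eM : [set z | s' z != z] = [set z | s z != z] :\ x :\ s x.
  apply/setP => z; rewrite !inE s'E.
  case: (eqVneq z x) => [->|zx]; first by rewrite tpermR eqxx /= andbF.
  case: (eqVneq z (s x)) => [->|zy]; first by rewrite hs tpermL eqxx.
  have h1 : x != s z by apply/eqP => e; move/eqP: zy; apply; rewrite e hs.
  have h2 : s x != s z by apply/eqP => e; move/eqP: zx; apply; apply: (@perm_inj _ s); rewrite e.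
  by rewrite tpermD // zx zy.
have hyx : s x \in [set z | s z != z] :\ x by rewrite !inE hs hx eq_sym hx.
have hxx : x \in [set z | s z != z] by rewrite inE.
have card : n = (#|[set z | s' z != z]|).+2.
  by rewrite -hn eM (cardsD1 x) hxx (cardsD1 (s x) (_ :\ x)) hyx.
have hlt : #|[set z | s' z != z]| < n by rewrite card.
have [h1 h2] := IH _ hlt s' (erefl _) hs'.
rewrite card /=; split; first by rewrite !negbK.
move: h2; rewrite /s' odd_permM odd_tperm eq_sym hx.
by move=> <-; case: (odd_perm s).
Qed.

Lemma a_seq1 m : is_pow2 m.+1 -> a_seq m = 1%R.
Proof.
rewrite /a_seq; case=> e he; rewrite ifT //; apply/existsP.
have he' : e < m.+2 by have := ltn_expl e (isT : 1 < 2); lia.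
by exists (Ordinal he'); rewrite /= he.
Qed.

Lemma a_seq0 m : a_seq m != 0%R -> is_pow2 m.+1.
Proof.
by rewrite /a_seq; case: ifP => // /existsP [e /eqP he] _; exists e.
Qed.

Lemma oddC2 n : odd 'C(n, 2) = odd n./2.
Proof.
elim: n => // n IH; rewrite binS bin1 oddD IH /= uphalf_half oddD oddb.
by rewrite addbC.
Qed.

Lemma nimble_Pm n (s : 'S_n) : nimble s -> Pm n s.
Proof. by move=> H; split=> i _; [exact: ltn_ord | exact: H i]. Qed.

Lemma nimble_inv n (s : 'S_n) : nimble s -> nimble s^-1.
Proof. by move=> H i; have := H (s^-1%g i); rewrite permKV (addnC i). Qed.

Lemma nimble_uniq n (s t : 'S_n) : nimble s -> nimble t -> t = s.
Proof.
move=> hs ht; apply/permP => i.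
apply: (@uniqP n n (leqnn n) t s _ _ _ _ i (ltn_ord i)); apply: nimble_Pm => //;
  exact: nimble_inv.
Qed.

Local Open Scope ring_scope.

Theorem theorem1p1 (n : nat) (hn : (1 <= n)%N) :
  (exists s : 'S_n, nimble s /\ forall t : 'S_n, nimble t -> t = s) /\
  (forall s : 'S_n, nimble s ->
     \det (hankel_a n) = (-1) ^+ s * \prod_(i < n) a_seq (i + s i) /\
     (-1) ^+ s * \prod_(i < n) a_seq (i + s i) = (-1) ^+ 'C(n, 2)).
Proof.
split.
  have [s0 [_ hs0]] := @existP n n (leqnn n).
  have ns0 : nimble s0 by move=> i; exact: hs0 i (ltn_ord i).
  by exists s0; split=> // t ht; exact: nimble_uniq.
move=> s hs; split.
  rewrite /determinant (bigD1 s) //= [X in _ + X]big1 ?addr0.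
    by congr (_ * _); apply: eq_bigr => i _; rewrite mxE.
  move=> t hts; rewrite (_ : \prod_i _ = 0) ?mulr0 //.
  apply/eqP; apply: contraNT hts => hnz; apply/eqP; apply: nimble_uniq => // i.
  move/prodf_neq0: hnz => /(_ i isT); rewrite mxE => /a_seq0; by rewrite addn1.
rewrite big1 ?mulr1 => [|i _]; last by apply: a_seq1; rewrite -addn1; exact: hs i.
rewrite -[in RHS]signr_odd oddC2.
have hinv : (s^-1 = s)%g by apply: nimble_uniq => //; exact: nimble_inv.
have hss x : s (s x) = x by have := permK s x; rewrite hinv.
have [hM hodd] := @invol_odd _ _ s (erefl _) hss.
rewrite hodd; congr (_ ^+ (nat_of_bool (odd _))).
case: n hn s hs hinv hss hM hodd => // n _ s hs hinv hss hM hodd.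
set F := [set x | s x == x].
have eC : [set x | s x != x] = ~: F by apply/setP => x; rewrite !inE.
have hF : (#|F| <= 1)%N.
  rewrite -(cards1 (@ord0 n)); apply: subset_leq_card; apply/subsetP => x.
  rewrite !inE => /eqP e; apply/eqP/ord_inj => /=.
  have [e' he] := hs x; move: he; rewrite e.
  case: e' => [|e']; rewrite ?expnS; lia.
have hc := cardsC F; rewrite card_ord -eC in hc.
set M := #|[set x | s x != x]| in hM hc *.
have eM := odd_double_half M; rewrite (negbTE hM) add0n in eM.
rewrite -hc halfD (negbTE hM) andbF add0n.
by case: #|F| hF => [|[|]].
Qed.
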